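(* Let $K$ be a field containing $\mathbb{F}_q$ and let $B\in\mathrm{GL}_n(K)$, and set $B^*=(B^{-1})^T$. Then the systems $BX^{(q)}=X$ and $B^*X^{(q)}=X$ have the same splitting field over $K$.
   Context: $X^{(q)}$ denotes entrywise $q$-th power. The splitting field over $K$ of the system $CX^{(q)}=X$ (for $C\in\mathrm{GL}_n(K)$) is the subfield of a separable closure $K_{\mathrm{sep}}$ generated over $K$ by the coordinates of all solutions $X\in K_{\mathrm{sep}}^n$. *)

(* Defs.v *)
From HB Require Import structures.
From mathcomp Require Import all_boot all_order all_algebra all_field.
Set Implicit Arguments. Unset Strict Implicit. Unset Printing Implicit Defensive.
Import GRing.Theory.
Local Open Scope ring_scope.

Definition entrywise_pow (L : fieldType) (q : nat) (n : nat) (X : 'cV[L]_n) : 'cV[L]_n :=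
  map_mx (fun x => x ^+ q) X.

Definition is_solution (K L : fieldType) (iota : {rmorphism K -> L}) (q n : nat)
  (C : 'M[K]_n) (X : 'cV[L]_n) : Prop :=
  map_mx iota C *m entrywise_pow q X = X.

Definition separably_closed (L : fieldType) : Prop :=
  forall p : {poly L}, (1 < size p)%N -> separable_poly p -> exists x, root p x.

Definition separable_algebraic (K L : fieldType) (iota : {rmorphism K -> L}) : Prop :=
  forall x : L, exists p : {poly K},
    [/\ p != 0, separable_poly p & root (map_poly iota p) x].

Definition is_separable_closure (K L : fieldType) (iota : {rmorphism K -> L}) : Prop :=
  separably_closed L /\ separable_algebraic iota.

(* The subfield of L generated over iota(K) by the coordinates of all solutions
   of C X^(q) = X in L: intersection of all subfields of L containing iota(K)
   and these coordinates. *)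
Definition splitting_field_of_system (K L : fieldType) (iota : {rmorphism K -> L})
  (q n : nat) (C : 'M[K]_n) (z : L) : Prop :=
  forall S : {pred L}, GRing.divring_closed S ->
              (forall k : K, iota k \in S) ->
              (forall X : 'cV[L]_n, is_solution iota q C X -> forall i, X i 0 \in S) ->
              z \in S.

(* Main.v *)
From HB Require Import structures.
From mathcomp Require Import all_boot all_order all_algebra all_field.
Require Import Defs.
From mathcomp Require Import all_fingroup all_solvable.
From mathcomp Require Import zify perm.
Set Implicit Arguments. Unset Strict Implicit. Unset Printing Implicit Defensive.
Import GRing.Theory.
Local Open Scope ring_scope.

Section Frob.
Variables (L : fieldType) (q : nat).
Hypothesis hq1 : (1 < q)%N.
Hypothesis hadd : forall x y : L, (x + y) ^+ q = x ^+ q + y ^+ q.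
Hypothesis hq0 : q%:R = 0 :> L.
Hypothesis hsc : separably_closed L.

Definition fq (x : L) := x ^+ q.

Lemma fq_add : {morph fq : x y / x + y}.
Proof. by move=> x y; rewrite /fq hadd. Qed.
Lemma fq0 : fq 0 = 0. Proof. by rewrite /fq expr0n; case: q hq1. Qed.
Lemma fq_opp x : fq (- x) = - fq x.
Proof. by apply/eqP; rewrite -subr_eq0 opprK -fq_add addNr fq0. Qed.
Lemma fq_is_zmod : zmod_morphism fq.
Proof. by move=> x y; rewrite fq_add fq_opp. Qed.
HB.instance Definition _ := GRing.isZmodMorphism.Build L L fq fq_is_zmod.
Lemma fq_is_mul : monoid_morphism fq.
Proof. by split; [rewrite /fq expr1n | move=> x y; rewrite /fq exprMn]. Qed.
HB.instance Definition _ := GRing.isMonoidMorphism.Build L L fq fq_is_mul.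

Lemma fq_eq0 x : (fq x == 0) = (x == 0).
Proof. by rewrite /fq expf_eq0; case: q hq1. Qed.


Fixpoint beta (a : nat -> L) (i : nat) : {poly L} :=
  if i is i'.+1 then beta a i' ^+ q + a i'.+1 *: 'X^q else a 0%N *: 'X^q.

Lemma beta_at0 a i : (beta a i).[0] = 0.
Proof.
have h0 : (0 : L) ^+ q = 0 by rewrite expr0n; case: q hq1.
elim: i => [|i IH] /=; first by rewrite hornerZ hornerXn h0 mulr0.
by rewrite hornerD horner_exp hornerZ hornerXn IH h0 mulr0 addr0.
Qed.

Lemma mulrn_q (p : {poly L}) : p *+ q = 0.
Proof. by apply/polyP => i; rewrite coefMn coef0 -mulr_natr hq0 mulr0. Qed.

Lemma beta_deriv a i : (beta a i)^`() = 0.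
Proof.
elim: i => [|i IH] /=; first by rewrite derivZ derivXn mulrn_q scaler0.
by rewrite derivD deriv_exp IH mul0r mul0rn derivZ derivXn mulrn_q scaler0 addr0.
Qed.

Lemma beta_size a j : a j != 0 -> (forall i, (i < j)%N -> a i = 0) ->
  forall i, ((i < j)%N -> beta a i = 0) /\ ((j <= i)%N -> (q < size (beta a i))%N).
Proof.
move=> aj ha.
have h0 : (0 : {poly L}) ^+ q = 0 by rewrite expr0n; case: q hq1.
elim => [|i [IH1 IH2]] /=.
  split; first by move=> hj; rewrite ha // scale0r.
  by rewrite leqn0 => /eqP hj; rewrite -hj size_scale // size_polyXn.
split.
  by move=> hj; rewrite IH1 ?(ltnW hj) // ha // scale0r h0 addr0.
rewrite leq_eqVlt => /orP [/eqP hj | hj].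
  by rewrite IH1 ?hj // h0 add0r -hj size_scale // size_polyXn.
have hs := IH2 hj.
have hsz := size_exp (beta a i) q.
have hp : (0 < size (beta a i ^+ q))%N.
  rewrite lt0n size_poly_eq0 expf_eq0; apply/nandP; right.
  by rewrite -size_poly_eq0 -lt0n (leq_trans _ hs).
have hlt : (size (a i.+1 *: 'X^q) < size (beta a i ^+ q))%N.
  apply: (leq_ltn_trans (size_scale_leq _ _)); rewrite size_polyXn.
  rewrite -(prednK hp) hsz ltnS.
  move: hs hq1; clear; set s := size _; nia.
rewrite size_polyDl // -(prednK hp) hsz.
move: hs hq1; clear; set s := size _; nia.
Qed.

Lemma beta_root a i : (q < size (beta a i))%N -> exists t, t != 0 /\ (beta a i).[t] = t.
Proof.
move=> hs.
set P := beta a i - 'X.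
have hP' : P^`() = -1 by rewrite /P derivB beta_deriv derivX sub0r.
have hP0 : root P 0 by rewrite /root /P hornerD hornerN hornerX beta_at0 subr0.
have hsP : size P = size (beta a i).
  rewrite /P size_polyDl // size_polyN size_polyX; exact: leq_ltn_trans hq1 hs.
have hsep : separable_poly P.
  rewrite unlock /= hP'; apply/Bezout_eq1_coprimepP; exists (0, -1).
  by rewrite /= mul0r add0r mulrNN mulr1.
have hX : 'X %| P by rewrite -[X in X %| _]subr0 -polyC0 -root_factor_theorem.
set Q := P %/ 'X.
have hPQ : Q * 'X = P by rewrite divpK.
have hsepQ : separable_poly Q by apply: (dvdp_separable _ hsep); rewrite -hPQ dvdp_mulIl.
have hsQ : (1 < size Q)%N.
  rewrite /Q size_divp ?polyX_eq0 // size_polyX hsP.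
  by move: hs hq1; clear; set s := size _; lia.
have [x hx] := hsc hsQ hsepQ.
have hQ0 : Q.[0] = -1.
  have := congr1 (fun p => p.[0]) (congr1 deriv hPQ).
  by rewrite /= derivM derivX hP' hornerD hornerM hornerX mulr0 add0r hornerM hornerC mulr1 hornerN hornerC => ->.
exists x; split.
  apply/negP => /eqP hx0; move: hx; rewrite /root hx0 hQ0 oppr_eq0.
  by rewrite oner_eq0.
move: hx; rewrite /root => /eqP hx.
have := congr1 (fun p => p.[x]) hPQ.
rewrite /= hornerM hx mul0r /P hornerD hornerN hornerX => /eqP.
by rewrite eq_sym subr_eq0 => /eqP.
Qed.

Section E1.
Variables (n : nat) (M : 'M[L]_n.+1).
Hypothesis hM : M \in unitmx.

Definition phi (v : 'cV[L]_n.+1) := M *m map_mx fq v.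

Lemma phiD u v : phi (u + v) = phi u + phi v.
Proof. by rewrite /phi map_mxD mulmxDr. Qed.
Lemma phi0 : phi 0 = 0.
Proof. by rewrite /phi map_mx0 mulmx0. Qed.
Lemma phiZ c v : phi (c *: v) = fq c *: phi v.
Proof. by rewrite /phi map_mxZ scalemxAr. Qed.
Lemma phi_sum k (F : 'I_k -> 'cV[L]_n.+1) : phi (\sum_(i < k) F i) = \sum_(i < k) phi (F i).
Proof. exact: (big_morph phi phiD phi0). Qed.
Lemma phi_eq0 v : phi v = 0 -> v = 0.
Proof.
move=> /(congr1 (mulmx (invmx M))); rewrite mulmx0 mulmxA mulVmx // mul1mx => h.
apply/matrixP => i j; move/matrixP: h => /(_ i j); rewrite !mxE => /eqP.
by rewrite fq_eq0 => /eqP.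
Qed.

Definition e0 : 'cV[L]_n.+1 := delta_mx 0 0.
Definition vit k := iter k phi e0.
Lemma vitS k : vit k.+1 = phi (vit k). Proof. by []. Qed.
Lemma vit_neq0 k : vit k != 0.
Proof.
elim: k => [|k IH].
  apply/eqP => /matrixP /(_ 0 0); rewrite !mxE eqxx /= => /eqP; exact/negP/oner_neq0.
by apply: contra IH; rewrite vitS => /eqP /phi_eq0 /eqP.
Qed.

Fixpoint vs k := if k is k'.+1 then vit k' :: vs k' else [::].
Lemma size_vs k : size (vs k) = k. Proof. by elim: k => //= k ->. Qed.
Lemma mem_vs k i : (i < k)%N -> vit i \in vs k.
Proof.
elim: k => // k IH; rewrite ltnS leq_eqVlt => /orP [/eqP -> | /IH h].
  by rewrite inE eqxx.
by rewrite inE h orbT.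
Qed.

Lemma span_coef k x : x \in <<vs k>>%VS ->
  exists a : nat -> L, x = \sum_(i < k) a i *: vit i.
Proof.
elim: k x => [|k IH] x /=.
  by rewrite span_nil memv0 => /eqP ->; exists (fun _ => 0); rewrite big_ord0.
rewrite span_cons => /memv_addP [y /vlineP [c ->] [z /IH [a ->] ->]].
exists (fun i => if i == k then c else a i); rewrite big_ord_recr /= eqxx addrC.
congr (_ + _); apply: eq_bigr => i _; by rewrite ltn_eqF.
Qed.

Lemma coef_span k (c : nat -> L) : \sum_(i < k) c i *: vit i \in <<vs k>>%VS.
Proof.
apply: rpred_sum => i _; apply: rpredZ; apply: memv_span; exact: mem_vs.
Qed.

Definition Pd k := vit k \in <<vs k>>%VS.

Lemma Pd_ex : exists k, Pd k.
Proof.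
case: (boolP [exists k : 'I_n.+2, Pd k]) => [/existsP [k hk] | /existsPn H].
  by exists (val k).
  have fr : forall k, (k <= n.+2)%N -> free (vs k).
    elim => [|k IH] hk; first by rewrite /free span_nil dimv0.
    rewrite /= free_cons IH ?(ltnW hk) // andbT.
    exact: (H (Ordinal hk)).
  have := fr _ (leqnn _); rewrite /free size_vs => /eqP h.
  have := dimvS (subvf <<vs n.+2>>%VS); rewrite h dimvf.
  by rewrite /dim /= muln1 ltnn.
Qed.

Lemma E1 : exists w : 'cV[L]_n.+1, w != 0 /\ phi w = w.
Proof.
case: (ex_minnP Pd_ex) => d hd dmin.
have d_gt0 : (0 < d)%N.
  case: d hd dmin => // hd _; move: hd; rewrite /Pd /= span_nil memv0.
  by rewrite (negPf (vit_neq0 0)).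
have [a ha] := span_coef hd.
have [j0 aj0] : exists j, a j != 0.
  case: (boolP [exists i : 'I_d, a i != 0]) => [/existsP [i hi] | /existsPn H].
    by exists (val i).
  move: (vit_neq0 d); rewrite ha big1 ?eqxx // => i _.
  by have := H i; move/negPn/eqP => ->; rewrite scale0r.
case: (ex_minnP (ex_intro (fun j => a j != 0) j0 aj0)) => j aj jmin.
have ha0 : forall i, (i < j)%N -> a i = 0.
  by move=> i hi; apply/eqP; apply/negP => /negP /jmin; rewrite leqNgt hi.
have hjd : (j < d)%N.
  rewrite ltnNge; apply/negP => hdj.
  move: (vit_neq0 d); rewrite ha big1 ?eqxx // => i _.
  by rewrite ha0 ?scale0r // (leq_trans (ltn_ord i)).
case: d d_gt0 hd dmin ha hjd => // d' _ hd dmin ha hjd.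
have [hb1 hb2] := beta_size aj ha0 d'.
have [t [tn0 ht]] := beta_root (hb2 hjd).
pose w := \sum_(i < d'.+1) (beta a i).[t] *: vit i.
exists w; split.
  apply/negP => /eqP hw.
  have : vit d' \in <<vs d'>>%VS.
    have -> : vit d' = \sum_(i < d') (- ((beta a i).[t] / t)) *: vit i.
      move: hw; rewrite /w big_ord_recr /= ht => /eqP; rewrite addrC addr_eq0 => /eqP h.
      apply: (scalerI tn0); rewrite h scaler_sumr -sumrN; apply: eq_bigr => i _.
      by rewrite scalerA mulrN mulrCA mulfV // mulr1 scaleNr.
    exact: (coef_span d' (fun i : nat => - ((beta a i).[t] / t))).
  by move=> hh; have := dmin d' hh; rewrite ltnn.
rewrite /w phi_sum.
under eq_bigr do rewrite phiZ.
rewrite big_ord_recr /= ht -vitS ha big_ord_recl /= [in RHS]big_ord_recl /=.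
rewrite scalerDr scaler_sumr !scalerA addrCA; congr (_ + _).
  by rewrite hornerZ hornerXn mulrC.
rewrite -big_split /=; apply: eq_bigr => i _; rewrite !add0n scalerA -scalerDl; congr (_ *: _).
by rewrite hornerD horner_exp hornerZ hornerXn /fq /bump leq0n add1n mulrC.
Qed.

End E1.

Lemma AS (c : L) : exists s, s == fq s + c.
Proof.
set P : {poly L} := 'X^q - 'X + c%:P.
have hsP : size P = q.+1.
  rewrite /P -addrA size_polyDl ?size_polyXn //.
  apply: (leq_ltn_trans (size_polyD _ _)); rewrite size_polyN size_polyX size_polyC.
  by move: hq1; case: (c != 0) => /=; lia.
have hP' : P^`() = -1.
  by rewrite /P derivD derivB derivXn mulrn_q derivX derivC sub0r addr0.
have hsep : separable_poly P.
  rewrite unlock /= hP'; apply/Bezout_eq1_coprimepP; exists (0, -1).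
  by rewrite /= mul0r add0r mulrNN mulr1.
have hsz : (1 < size P)%N by rewrite hsP ltnS ltnW.
have [x hx] := hsc hsz hsep.
exists x; move: hx; rewrite /root /P !hornerE /fq.
by rewrite addrAC subr_eq0 eq_sym.
Qed.

Lemma fqm_col1 n : map_mx fq (col_mx (1 : 'M[L]_1) (0 : 'cV[L]_n)) = col_mx 1 0.
Proof. by rewrite map_col_mx map_mx1 map_mx0. Qed.

Lemma LangS n (IH : forall N : 'M[L]_n, N \in unitmx ->
   exists Z, Z \in unitmx /\ N *m map_mx fq Z = Z)
  (M : 'M[L]_(1 + n)) : M \in unitmx ->
   exists Y, Y \in unitmx /\ M *m map_mx fq Y = Y.
Proof.
move=> hM.
have [w [wn0 hw]] := E1 hM.
have [k hk] : exists k, w k 0 != 0.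
  case: (boolP [exists k, w k 0 != 0]) => [/existsP [k hk] | /existsPn H].
    by exists k.
  case/eqP: wn0; apply/matrixP => i j; rewrite ord1 mxE; exact/eqP/negPn/H.
set Pi : 'M[L]_(1 + n) := perm_mx (tperm 0 k).
set u := Pi *m w.
have hu : u 0 0 != 0 by rewrite /u -row_permE mxE tpermL.
set Q : 'M[L]_(1 + n) := block_mx (usubmx u) 0 (dsubmx u) 1%:M.
set e : 'cV[L]_(1 + n) := col_mx 1 0.
have hQe : Q *m e = u by rewrite /Q /e mul_block_col !mulmx1 !mulmx0 !addr0 vsubmxK.
have hQ : Q \in unitmx.
  rewrite unitmxE /Q det_lblock det1 mulr1 unitfE det_mx11.
  by rewrite mxE (_ : lshift n 0 = 0) //; exact: val_inj.
have hPi : Pi \in unitmx by exact: unitmx_perm.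
set P := invmx Pi *m Q.
have hP : P \in unitmx by rewrite unitmx_mul unitmx_inv hPi.
have hPe : P *m e = w by rewrite /P -mulmxA hQe /u mulKmx.
set M' := invmx P *m M *m map_mx fq P.
have hM' : M' \in unitmx by rewrite !unitmx_mul unitmx_inv hP hM map_unitmx hP.
have hM'e : M' *m e = e.
  rewrite /M' -!mulmxA.
  have -> : map_mx fq P *m e = map_mx fq w by rewrite -hPe [RHS]map_mxM /e fqm_col1.
  have -> : M *m map_mx fq w = w by exact: hw.
  by rewrite -hPe mulKmx.
rewrite -[M']submxK in hM' hM'e.
set a := ulsubmx M' in hM' hM'e; set r := ursubmx M' in hM' hM'e.
set c := dlsubmx M' in hM' hM'e; set N := drsubmx M' in hM' hM'e.
move: hM'e; rewrite /e mul_block_col !mulmx1 !mulmx0 !addr0 => /eq_col_mx [ha hc].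
rewrite ha hc in hM'.
have hN : N \in unitmx.
  by move: hM'; rewrite !unitmxE det_ublock det1 mul1r.
have [Z' [hZ' eZ']] := IH N hN.
set cc := r *m map_mx fq Z'.
pose s : 'rV[L]_n := \row_j xchoose (AS (cc 0 j)).
have hs : s = map_mx fq s + cc.
  apply/matrixP => i j; rewrite ord1 !mxE.
  exact: (eqP (xchooseP (AS _))).
set Z : 'M[L]_(1 + n) := block_mx 1%:M s 0 Z'.
have hZ : Z \in unitmx by rewrite unitmxE det_ublock det1 mul1r -unitmxE.
have eZ : M' *m map_mx fq Z = Z.
  rewrite -[M']submxK -/a -/r -/c -/N ha hc /Z map_block_mx map_mx1 map_mx0.
  rewrite mulmx_block ?mul1mx ?mul0mx ?mulmx0 ?add0r ?addr0 ?mulmx1.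
  by rewrite eZ' -hs.
exists (P *m Z); split; first by rewrite unitmx_mul hP hZ.
rewrite map_mxM mulmxA.
have -> : M *m map_mx fq P = P *m M' by rewrite /M' !mulmxA mulmxV // mul1mx.
by rewrite -mulmxA eZ.
Qed.

Lemma Lang n (M : 'M[L]_n) : M \in unitmx ->
  exists Y, Y \in unitmx /\ M *m map_mx fq Y = Y.
Proof.
elim: n M => [|n IH] M hM.
  by exists 1%:M; split; [exact: unitmx1 | apply/matrixP => -[]].
exact: LangS IH M hM.
Qed.

Section Closure.
Variable S : {pred L}.
Hypothesis hS : GRing.divring_closed S.

Lemma S1 : 1 \in S. Proof. by case: hS. Qed.
Lemma SB x y : x \in S -> y \in S -> x - y \in S. Proof. by case: hS => _ h _; apply: h. Qed.
Lemma SDiv x y : x \in S -> y \in S -> x / y \in S. Proof. by case: hS => _ _ h; apply: h. Qed.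
Lemma S0 : 0 \in S. Proof. by rewrite -(subrr 1) SB // S1. Qed.
Lemma SN x : x \in S -> - x \in S. Proof. by move=> h; rewrite -sub0r SB // S0. Qed.
Lemma SD x y : x \in S -> y \in S -> x + y \in S.
Proof. by move=> hx hy; rewrite -(opprK y) SB // SN. Qed.
Lemma SV x : x \in S -> x^-1 \in S. Proof. by move=> h; rewrite -div1r SDiv // S1. Qed.
Lemma SM x y : x \in S -> y \in S -> x * y \in S.
Proof.
move=> hx hy; case: (eqVneq y 0) => [->|yn0]; first by rewrite mulr0 S0.
by rewrite -(invrK y) SDiv // SV.
Qed.
Lemma SX x k : x \in S -> x ^+ k \in S.
Proof. by move=> h; elim: k => [|k IH]; rewrite ?expr0 ?S1 // exprS SM. Qed.
Lemma Ssum (I : finType) (P : pred I) (f : I -> L) : (forall i, f i \in S) -> \sum_(i | P i) f i \in S.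
Proof. by move=> h; apply: (big_ind (fun x => x \in S)) => //; [exact: S0 | exact: SD]. Qed.
Lemma Sprod (I : finType) (P : pred I) (f : I -> L) : (forall i, f i \in S) -> \prod_(i | P i) f i \in S.
Proof. by move=> h; apply: (big_ind (fun x => x \in S)) => //; [exact: S1 | exact: SM]. Qed.

Lemma Sdet m (A : 'M[L]_m) : (forall i j, A i j \in S) -> \det A \in S.
Proof.
move=> h; rewrite /determinant; apply: Ssum => s; apply: SM.
  by apply: SX; apply: SN; exact: S1.
by apply: Sprod.
Qed.

Lemma Sinv m (A : 'M[L]_m) : (forall i j, A i j \in S) -> forall i j, invmx A i j \in S.
Proof.
move=> h i j; rewrite /invmx; case: (A \in unitmx); last exact: h.
rewrite !mxE; apply: SM; first by apply: SV; apply: Sdet.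
rewrite /cofactor; apply: SM; first by apply: SX; apply: SN; exact: S1.
by apply: Sdet => k l; rewrite !mxE.
Qed.
End Closure.

Variables (K : fieldType) (iota : {rmorphism K -> L}).
Hypothesis hroots : forall c : L, c ^+ q = c -> exists k : K, c = iota k.

Lemma dir n (C : 'M[K]_n) (hC : C \in unitmx) (S : {pred L})
  (hS : GRing.divring_closed S) (hK : forall k, iota k \in S)
  (hsol : forall X, is_solution iota q (invmx C)^T X -> forall i, X i 0 \in S) :
  forall X, is_solution iota q C X -> forall i, X i 0 \in S.
Proof.
move=> X hX.
set C' := map_mx iota C.
have hC' : C' \in unitmx by rewrite map_unitmx.
set M := map_mx iota (invmx C)^T.
have hM : M \in unitmx by rewrite map_unitmx unitmx_tr unitmx_inv.
have [Y [hY eY]] := Lang hM.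
have hYS : forall i j, Y i j \in S.
  move=> i j.
  have : is_solution iota q (invmx C)^T (col j Y).
    apply/matrixP => k l; rewrite ord1 !mxE -[in RHS]eY mxE; apply: eq_bigr => m _.
    by rewrite !mxE.
  by move/hsol => /(_ i); rewrite mxE.
have eX : map_mx fq X = invmx C' *m X.
  by rewrite -{2}hX mulKmx.
have eY' : (map_mx fq Y)^T = Y^T *m C'.
  have -> : map_mx fq Y = invmx M *m Y by rewrite -{2}eY mulKmx.
  have -> : M = (invmx C')^T by rewrite /M -map_trmx map_invmx.
  by rewrite trmx_inv invmxK trmx_mul trmxK.
set c := Y^T *m X.
have ec : map_mx fq c = c.
  by rewrite /c map_mxM -map_trmx eY' eX mulmxA mulmxK.
have hcS : forall i, c i 0 \in S.
  move=> i; have := congr1 (fun A : 'cV_n => A i 0) ec; rewrite /= mxE => /hroots [k ->].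
  exact: hK.
have -> : X = invmx (Y^T) *m c by rewrite /c mulKmx // unitmx_tr.
move=> i; rewrite mxE; apply: Ssum => // j; apply: SM => //.
apply: Sinv => // k l; rewrite mxE; exact: hYS.
Qed.

End Frob.

Lemma roots_img (F : finFieldType) (K L : fieldType)
  (phi : {rmorphism F -> K}) (iota : {rmorphism K -> L}) (c : L) :
  c ^+ #|F| = c -> exists k : K, c = iota k.
Proof.
move=> hc.
case: (boolP [exists f : F, c == iota (phi f)]) => [/existsP [f /eqP ->] | /existsPn H].
  by exists (phi f).
exfalso.
have hq1 : (1 < #|F|)%N := finNzRing_gt1 F.
set P : {poly L} := 'X^#|F| - 'X.
have hsP : size P = #|F|.+1.
  by rewrite /P size_polyDl size_polyXn // size_polyN size_polyX ltnS.
have hP0 : P != 0 by rewrite -size_poly_eq0 hsP.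
set rs := c :: [seq iota (phi f) | f <- enum F].
have hall : all (root P) rs.
  rewrite /= /root /P !hornerE hc subrr eqxx /=.
  apply/allP => x /mapP [f _ ->]; rewrite !hornerE -!rmorphXn expf_card subrr //.
have huniq : uniq rs.
  rewrite /= map_inj_uniq ?enum_uniq ?andbT.
    by apply/mapP => [[f _ hf]]; move: (H f); rewrite hf eqxx.
  by move=> x y /fmorph_inj /fmorph_inj.
have := max_poly_roots hP0 hall huniq.
by rewrite /= size_map -cardE hsP ltnn.
Qed.

Theorem proposition4p3 (F : finFieldType) (K L : fieldType)
  (phi : {rmorphism F -> K}) (iota : {rmorphism K -> L})
  (n : nat) (B : 'M[K]_n) :
  is_separable_closure iota -> B \in unitmx ->
  forall z : L, splitting_field_of_system iota #|F| B z <->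
                splitting_field_of_system iota #|F| (invmx B)^T z.
Proof.
move=> [hsc _] hB z.
have [p pp pcF] := finPcharP F.
have pcL : p \in [pchar L] := rmorph_pchar iota (rmorph_pchar phi pcF).
have pnat : p.-nat #|F|.
  by have := abelem_pgroup (fin_ring_pchar_abelem pcF); rewrite /pgroup cardsT.
have hq1 : (1 < #|F|)%N := finNzRing_gt1 F.
have hadd : forall x y : L, (x + y) ^+ #|F| = x ^+ #|F| + y ^+ #|F|.
  move=> x y; apply: exprDn_pchar; by rewrite (eq_pnat _ (pcharf_eq pcL)).
have hq0 : (#|F|)%:R = 0 :> L.
  have [k hk] := p_natP pnat; rewrite hk natrX (pcharf0 pcL) expr0n.
  by case: k hk => // hk; move: hq1; rewrite hk.
have hroots := roots_img phi iota.
split => H S hS hK hsol; apply: H => //.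
  exact: (dir hq1 hadd hq0 hsc hroots hB hS hK hsol).
have hB' : (invmx B)^T \in unitmx by rewrite unitmx_tr unitmx_inv.
apply: (dir hq1 hadd hq0 hsc hroots hB' hS hK).
by rewrite trmx_inv trmxK invmxK.
Qed.
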